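(* Let $\mathcal{M}=(E_t,\mathcal{T})$ be a simple oriented matroid, let $k$ be an integer with $1\le k\le|\mathcal{T}|/2$, and put $h=\lfloor(|\mathcal{T}|-k+1)/2\rfloor$ and $\mathcal{P}=\bigcup_{e\in E_t}\binom{\mathcal{T}^+_e}{h}$. For a family $\mathcal{G}\subseteq\mathcal{P}$ write $U_{\mathcal{G}}=\bigcup_{G\in\mathcal{G}}G$. Then \[ \mathring{\kappa}^{\ast}_k(\mathcal{M})=\binom{|\mathcal{T}|/2}{k}2^k+\sum_{\substack{\mathcal{G}\subseteq\mathcal{P}:\\ 1\le\#\mathcal{G}\le\binom{|\mathcal{T}|-k}{h},\\ |U_{\mathcal{G}}|\le|\mathcal{T}|-k}}(-1)^{\#\mathcal{G}}\sum_{j=0}^{k}\binom{|U_{\mathcal{G}}\cup -U_{\mathcal{G}}|-|U_{\mathcal{G}}|}{j}\binom{\tfrac12\bigl(|\mathcal{T}|-|U_{\mathcal{G}}\cup-U_{\mathcal{G}}|\bigr)}{k-j}2^{k-j}. \]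
   Context: Let $t\ge 1$ and $E_t=\{1,\dots,t\}$. $\mathcal{M}=(E_t,\mathcal{T})$ is a simple oriented matroid (no loops, parallel or antiparallel elements) with set of topes $\mathcal{T}\subseteq\{+,-\}^{E_t}$, closed under negation (so $|\mathcal{T}|$ is even). For $e\in E_t$, the positive halfspace is $\mathcal{T}^+_e=\{T\in\mathcal{T}: T(e)=+\}$. For $G\subseteq\mathcal{T}$, $-G=\{-T:T\in G\}$. For a set $X$, $\binom{X}{j}$ denotes the family of $j$-element subsets of $X$. A tope committee for $\mathcal{M}$ is a subset $\mathcal{K}^{\ast}\subset\mathcal{T}$ with $|\{T\in\mathcal{K}^{\ast}: T(e)=+\}|>\tfrac12|\mathcal{K}^{\ast}|$ for every $e\in E_t$. $\mathring{\kappa}^{\ast}_k(\mathcal{M})$ is the number of tope committees of cardinality $k$ containing no pair of opposite topes $\{T,-T\}$. Binomial coefficients $\binom{n}{j}$ are $0$ when $j>n$ or $j<0$. *)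

(* Defs.v *)
From HB Require Import structures.
From mathcomp Require Import all_boot all_order all_algebra.
Set Implicit Arguments. Unset Strict Implicit. Unset Printing Implicit Defensive.
Import GRing.Theory Num.Theory.

(* Ground set E_t = {1,..,t} is represented by 'I_t.
   A sign vector in {+,-,0}^E_t is a finite function 'I_t -> option bool,
   with Some true = +, Some false = -, None = 0. *)
Definition svec (t : nat) := {ffun 'I_t -> option bool}.

Definition sv_zero (t : nat) : svec t := [ffun => None].
Definition sv_neg t (X : svec t) : svec t := [ffun e => omap negb (X e)].
Definition sv_comp t (X Y : svec t) : svec t :=
  [ffun e => if X e is Some b then Some b else Y e].
Definition sv_sep t (X Y : svec t) (e : 'I_t) : bool :=
  match X e, Y e with Some a, Some b => a != b | _, _ => false end.
Definition sv_le t (X Y : svec t) : Prop :=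
  forall e, X e != None -> Y e = X e.

(* Covector axioms of an oriented matroid (Bjorner et al., Def. 4.1.1). *)
Definition is_OM_covectors t (L : {set svec t}) : Prop :=
  [/\ sv_zero t \in L,
      (forall X, X \in L -> sv_neg X \in L),
      (forall X Y, X \in L -> Y \in L -> sv_comp X Y \in L) &
      (forall X Y e, X \in L -> Y \in L -> sv_sep X Y e ->
         exists2 Z, Z \in L &
           Z e = None /\ (forall f, ~~ sv_sep X Y f -> Z f = sv_comp X Y f))].

(* Simple: no loops, no parallel and no antiparallel pairs of elements. *)
Definition OM_simple t (L : {set svec t}) : Prop :=
  (forall e : 'I_t, exists2 X, X \in L & X e != None) /\
  (forall e f : 'I_t, e != f ->
     ~ (forall X, X \in L -> X e = X f) /\
     ~ (forall X, X \in L -> X e = omap negb (X f))).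

(* Full sign vectors in {+,-}^E_t (true = +). *)
Definition tvec (t : nat) := {ffun 'I_t -> bool}.
Definition tv_lift t (T : tvec t) : svec t := [ffun e => Some (T e)].
Definition tv_neg t (T : tvec t) : tvec t := [ffun e => ~~ T e].

(* Topes: maximal covectors (all of which lie in {+,-}^E_t for a loopless OM). *)
Definition sv_leb t (X Y : svec t) : bool :=
  [forall e, (X e != None) ==> (Y e == X e)].
Definition is_tope t (L : {set svec t}) (X : svec t) : bool :=
  (X \in L) && [forall Y in L, sv_leb X Y ==> (Y == X)].

Definition topes t (L : {set svec t}) : {set tvec t} :=
  [set T : tvec t | is_tope L (tv_lift T)].

Definition halfspace t (Tp : {set tvec t}) (e : 'I_t) : {set tvec t} :=
  [set T in Tp | T e].

Definition negset t (G : {set tvec t}) : {set tvec t} := [set tv_neg T | T in G].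

Definition tope_committee t (Tp : {set tvec t}) (K : {set tvec t}) : bool :=
  (K \subset Tp) && [forall e : 'I_t, #|K| < 2 * #|[set T in K | T e]| ].

Definition no_opposite t (K : {set tvec t}) : bool :=
  [forall T in K, tv_neg T \notin K].

Definition kappa_ring t (Tp : {set tvec t}) (k : nat) : nat :=
  #|[set K : {set tvec t} | [&& tope_committee Tp K, #|K| == k & no_opposite K]]|.

Definition Pfam t (Tp : {set tvec t}) (h : nat) : {set {set tvec t}} :=
  \bigcup_(e : 'I_t) [set G : {set tvec t} | (G \subset halfspace Tp e) && (#|G| == h)].

Definition Ufam t (GG : {set {set tvec t}}) : {set tvec t} := \bigcup_(G in GG) G.

(* Main.v *)
Require Import Defs.
From HB Require Import structures.
From Stdlib Require Import Lia.
From mathcomp Require Import all_boot all_order all_algebra.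
Import GRing.Theory Num.Theory.
Set Implicit Arguments. Unset Strict Implicit. Unset Printing Implicit Defensive.

Definition g s q k := (\sum_(0 <= j < k.+1) 'C(s, j) * 'C(q, k - j) * 2 ^ (k - j))%N.

Lemma g_k0 s q : g s q 0 = 1%N.
Proof. by rewrite /g big_nat1 !bin0. Qed.

Lemma g00 k : g 0 0 k.+1 = 0%N.
Proof. by rewrite /g big1_seq // => -[|j] _; rewrite ?bin0n. Qed.

Lemma g_Ss s q k : g s.+1 q k.+1 = (g s q k.+1 + g s q k)%N.
Proof.
rewrite /g big_nat_recl // [in RHS]big_nat_recl // !bin0 -addnA -big_split /=.
congr (_ + _)%N; by apply: eq_bigr => j _; rewrite subSS binS !mulnDl.
Qed.

Lemma g_Sq s q k : g s q.+1 k.+1 = (g s q k.+1 + 2 * g s q k)%N.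
Proof.
rewrite /g big_nat_recr // [X in (X + _)%N]big_nat_recr //= subnn !bin0 muln1.
rewrite addnAC big_distrr -big_split /=; congr (_ + _)%N.
rewrite big_nat_cond [in RHS]big_nat_cond; apply: eq_bigr => j.
rewrite andbT => /andP[_ jk]; by rewrite subSn // binS expnS mulnDr mulnDl [2 * (_ * _)]mulnC -!mulnA [2 * 2 ^ _]mulnC.
Qed.

Section Neg.
Variable t : nat.
Implicit Types (x y : tvec t) (X Y U : {set tvec t}).

Lemma tv_negK : involutive (@tv_neg t).
Proof. by move=> x; apply/ffunP => e; rewrite !ffunE negbK. Qed.

Lemma tv_neg_inj : injective (@tv_neg t).
Proof. exact: inv_inj tv_negK. Qed.

Lemma tv_neg_eq x y : (tv_neg x == y) = (x == tv_neg y).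
Proof. by apply/eqP/eqP => [<-|->]; rewrite tv_negK. Qed.

Lemma in_negset x U : (x \in negset U) = (tv_neg x \in U).
Proof.
apply/imsetP/idP => [[y Hy Ex]|H]; first by rewrite Ex tv_negK.
by exists (tv_neg x); rewrite ?tv_negK.
Qed.

Hypothesis t_gt0 : (0 < t)%N.
Definition e0 : 'I_t := Ordinal t_gt0.

Lemma tv_neg_neq x : tv_neg x != x.
Proof.
apply/eqP => /ffunP /(_ e0); rewrite ffunE; by case: (x e0).
Qed.

Lemma card_closed Y e : (forall y, y \in Y -> tv_neg y \in Y) ->
  #|Y| = (2 * #|[set y in Y | y e]|)%N.
Proof.
move=> HY.
have -> : #|Y| = (#|[set y in Y | y e]| + #|[set y in Y | ~~ y e]|)%N.
  rewrite -(cardsID [set y : tvec t | y e] Y); congr (_ + _)%N; apply: eq_card => y;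
  by rewrite !inE // andbC.
suff -> : [set y in Y | ~~ y e] = negset [set y in Y | y e].
  by rewrite card_imset ?mul2n ?addnn //; exact: tv_neg_inj.
apply/setP => y; rewrite in_negset !inE ffunE.
case: (y e); rewrite ?andbF ?andbT //=.
by apply/idP/idP => /HY; rewrite ?tv_negK.
Qed.


Lemma no_oppP (K : {set tvec t}) :
  reflect (forall T, T \in K -> tv_neg T \notin K) (no_opposite K).
Proof. exact: forall_inP. Qed.

Definition nsets X k := [set K : {set tvec t} | [&& K \subset X, #|K| == k & no_opposite K]].
Definition fc X k := #|nsets X k|.

Lemma fc0 X : fc X 0 = 1%N.
Proof.
rewrite /fc (_ : nsets X 0 = [set set0]) ?cards1 //.
apply/setP => K; rewrite !inE cards_eq0.
case: eqP => [->|]; rewrite ?andbF //= sub0set /=.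
by apply/forall_inP => T; rewrite inE.
Qed.

Lemma fc_set0 k : fc set0 k.+1 = 0%N.
Proof.
apply/eqP; rewrite cards_eq0; apply/eqP/setP => K; rewrite !inE subset0.
by case: eqP => // ->; rewrite cards0.
Qed.

Lemma fc_step X x k : x \in X ->
  fc X k.+1 = (fc (X :\ x) k.+1 + fc (X :\ x :\ tv_neg x) k)%N.
Proof.
move=> xX; rewrite /fc -(cardsID [set K : {set tvec t} | x \in K] (nsets X k.+1)) addnC.
congr (_ + _)%N.
  apply: eq_card => K; rewrite !inE subsetD1.
  by case: (x \in K); rewrite ?andbF ?andbT.
rewrite -(@card_in_imset _ _ (fun K => x |: K) (nsets (X :\ x :\ tv_neg x) k)); last first.
  move=> A B; rewrite !inE => /and3P[HA _ _] /and3P[HB _ _] E.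
  have xA : x \notin A by move: HA; rewrite !subsetD1 => /andP[/andP[_ ->]].
  have xB : x \notin B by move: HB; rewrite !subsetD1 => /andP[/andP[_ ->]].
  by rewrite -(setU1K xA) -(setU1K xB) E.
apply: eq_card => K; rewrite !inE; apply/idP/idP.
  case/andP=> /and3P[KX /eqP cK /no_oppP nK] xK.
  apply/imsetP; exists (K :\ x); last by rewrite setD1K.
  rewrite !inE !subsetD1 subDset (subset_trans KX) ?subsetUr //=.
  rewrite !inE eqxx /= (negbTE (nK _ xK)) andbF /=.
  rewrite (cardsD1 x K) xK add1n /= in cK; case: cK => ->; rewrite eqxx /=.
  apply/no_oppP => T; rewrite !inE => /andP[_ TK]; apply/negP => /andP[_].
  exact/negP/nK.
case/imsetP => A; rewrite !inE => /and3P[AX /eqP cA /no_oppP nA] ->.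
rewrite setU11 andbT.
move: AX; rewrite !subsetD1 => /andP[/andP[AX xA] nxA].
rewrite subUset sub1set xX AX cardsU1 xA cA eqxx /=.
apply/no_oppP => T; rewrite !inE; case/orP => [/eqP ->|TA].
  by rewrite negb_or nxA andbT tv_neg_neq.
rewrite negb_or (nA _ TA) andbT tv_neg_eq.
by apply: contraNN nxA => /eqP <-.
Qed.

Definition sing (X : {set tvec t}) := [set x in X | tv_neg x \notin X].
Definition prs (X : {set tvec t}) := [set x in X | tv_neg x \in X].

Ltac solve_set x y :=
  rewrite !inE ?tv_neg_eq ?tv_negK;
  case: (y =P tv_neg x) => [->|_]; [|case: (y =P x) => [->|_]];
  rewrite ?tv_negK ?eqxx ?(negbTE (tv_neg_neq x)) ?(eq_sym x (tv_neg x)) ?(negbTE (tv_neg_neq x)) //=;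
  repeat match goal with H : is_true (_ \in _) |- _ => rewrite H /= | H : is_true (_ \notin _) |- _ => rewrite (negbTE H) /= end; try done.

Section P.
Variables (X : {set tvec t}) (x : tvec t).
Hypotheses (xX : x \in X) (nxX : tv_neg x \in X).
Lemma L1 : sing (X :\ x) = tv_neg x |: sing X.
Proof. apply/setP => y; solve_set x y. Qed.
Lemma L2 : prs (X :\ x) = prs X :\ x :\ tv_neg x.
Proof. apply/setP => y; solve_set x y. Qed.
Lemma L3 : sing (X :\ x :\ tv_neg x) = sing X.
Proof. apply/setP => y; solve_set x y. Qed.
Lemma L4 : prs (X :\ x :\ tv_neg x) = prs X :\ x :\ tv_neg x.
Proof. apply/setP => y; solve_set x y. Qed.
End P.
Section Q.
Variables (X : {set tvec t}) (x : tvec t).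
Hypotheses (xX : x \in X) (nxX : tv_neg x \notin X).
Lemma L5 : sing (X :\ x) = sing X :\ x.
Proof. apply/setP => y; solve_set x y. Qed.
Lemma L6 : prs (X :\ x) = prs X.
Proof. apply/setP => y; solve_set x y. Qed.
Lemma L7 : X :\ x :\ tv_neg x = X :\ x.
Proof. apply/setP => y; solve_set x y. Qed.
End Q.

Lemma fc_g n (X : {set tvec t}) s q k : (#|X| <= n)%N -> #|sing X| = s -> #|prs X| = q.*2 ->
  fc X k = g s q k.
Proof.
elim: n X s q k => [|n IH] X s q [|k] HX Hs Hq; try by rewrite fc0 g_k0.
  move: HX; rewrite leqn0 cards_eq0 => /eqP X0; subst X.
  have s0 : s = 0%N by rewrite -Hs; apply/eqP; rewrite cards_eq0; apply/eqP/setP=> y; rewrite !inE.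
  have q0 : q = 0%N.
    by apply/eqP; rewrite -double_eq0 -Hq cards_eq0; apply/eqP/setP=> y; rewrite !inE.
  by rewrite s0 q0 fc_set0 g00.
have [X0|[x xX]] := set_0Vmem X.
  subst X.
  have s0 : s = 0%N by rewrite -Hs; apply/eqP; rewrite cards_eq0; apply/eqP/setP=> y; rewrite !inE.
  have q0 : q = 0%N.
    by apply/eqP; rewrite -double_eq0 -Hq cards_eq0; apply/eqP/setP=> y; rewrite !inE.
  by rewrite s0 q0 fc_set0 g00.
have HX1 : (#|X :\ x| <= n)%N by move: HX; rewrite (cardsD1 x X) xX.
have HX2 : (#|X :\ x :\ tv_neg x| <= n)%N.
  by apply: leq_trans HX1; apply: subset_leq_card; apply: subsetDl.
rewrite (fc_step _ xX).
case nxX : (tv_neg x \in X).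
  have xP : x \in prs X by rewrite !inE xX nxX.
  have nxP : tv_neg x \in prs X :\ x by rewrite !inE tv_negK tv_neg_neq xX nxX.
  have cP : #|prs X| = (#|prs X :\ x :\ tv_neg x|).+2.
    by rewrite (cardsD1 x) xP (cardsD1 (tv_neg x) (prs X :\ x)) nxP.
  case: q Hq => [|q] Hq; first by rewrite cP in Hq.
  have Hq' : #|prs X :\ x :\ tv_neg x| = q.*2.
    by move: Hq; rewrite cP doubleS => -[].
  rewrite (IH _ s.+1 q) //; last by rewrite L2.
    rewrite (IH _ s q) //; last by rewrite L4.
      by rewrite g_Ss g_Sq mul2n -addnn addnA.
    by rewrite L3.
  by rewrite L1 // cardsU1 Hs !inE tv_negK xX nxX.
have nxX' : tv_neg x \notin X by rewrite nxX.
have xS : x \in sing X by rewrite !inE xX nxX.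
case: s Hs => [|s] Hs.
  by move: Hs; rewrite (cardsD1 x) xS.
rewrite L7 // !(IH _ s q) //; first by rewrite g_Ss.
  by rewrite L5 //; move: Hs; rewrite (cardsD1 x) xS => -[].
  by rewrite L6.
  by rewrite L5 //; move: Hs; rewrite (cardsD1 x) xS => -[].
  by rewrite L6.
Qed.

End Neg.


Local Open Scope ring_scope.
Lemma alt_sum (T : finType) (B : {set T}) :
  \sum_(A : {set T} | A \subset B) (-1) ^+ #|A| = (B == set0)%:R :> int.
Proof.
rewrite (partition_big (fun A : {set T} => inord #|A| : 'I_(#|B|).+1) predT) //=.
transitivity (\sum_(i < #|B|.+1) (1 ^+ (#|B| - i) * (-1) ^+ i) *+ 'C(#|B|, i) : int).
  apply: eq_bigr => i _; rewrite expr1n mul1r -cards_draws -sumr_const.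
  apply: eq_big => [A|A].
    rewrite inE; case AB : (A \subset B) => //=.
    by rewrite -val_eqE /= inordK // ltnS subset_leq_card.
  case/andP => AB /eqP <-; by rewrite inordK // ltnS subset_leq_card.
by rewrite -exprDn addrN expr0n cards_eq0.
Qed.

Lemma PoszSum (I : Type) (r : seq I) (P : pred I) (F : I -> nat) :
  ((\sum_(i <- r | P i) F i)%N)%:Z = (\sum_(i <- r | P i) (F i)%:Z)%R.
Proof.
elim: r => [|x r IH]; rewrite ?big_nil // !big_cons.
by case: (P x); rewrite ?PoszD IH.
Qed.

Lemma card_sumZ (T : finType) (A : {set T}) (P : pred T) :
  (#|[set x in A | P x]|)%:Z = (\sum_(x in A) (P x : nat)%:Z)%R.
Proof.
rewrite -[LHS]natz -sumr_const big_mkcond [RHS]big_mkcond /=.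
apply: eq_bigr => x _; rewrite !inE; by case: (x \in A); case: (P x).
Qed.

Lemma sv_negK t : involutive (@sv_neg t).
Proof. by move=> X; apply/ffunP => e; rewrite !ffunE; case: (X e) => [[]|]. Qed.

Lemma sv_leb_neg t (X Y : svec t) : sv_leb (sv_neg X) Y = sv_leb X (sv_neg Y).
Proof.
apply: eq_forallb => e; rewrite !ffunE.
by case: (X e) => [[]|]; case: (Y e) => [[]|].
Qed.

Lemma topes_neg t (L : {set svec t}) T : is_OM_covectors L ->
  T \in topes L -> tv_neg T \in topes L.
Proof.
case=> _ HN _ _; rewrite !inE /is_tope => /andP[HT Hmax].
have -> : tv_lift (tv_neg T) = sv_neg (tv_lift T) by apply/ffunP => e; rewrite !ffunE.
rewrite (HN _ HT) /=; apply/forall_inP => Y YL; apply/implyP => HY.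
have := forall_inP Hmax (sv_neg Y) (HN _ YL).
rewrite -sv_leb_neg HY /= => /eqP E.
by rewrite -E sv_negK.
Qed.

Lemma arith N m k a : N = (2 * m)%N -> (k <= m)%N -> (a <= m)%N ->
  (k < 2 * a)%N = ~~ ((N - k + 1) %/ 2 <= m - a)%N.
Proof.
move=> -> km am.
have h1 := leq_divM (2 * m - k + 1) 2.
have h2 := @ltn_ceil (2 * m - k + 1) 2 isT.
move: h1 h2; set h := ((2 * m - k + 1) %/ 2)%N => h1 h2.
case: (ltnP k (2 * a)) => H; apply/esym.
  apply/negP => H'.
  move/leP: h1; move/leP: h2; move/leP: H; move/leP: H'; move/leP: km; move/leP: am.
  rewrite -!multE -!plusE -!minusE; lia.
apply/negPn/leP.
move/leP: h1; move/leP: h2; move/leP: H; move/leP: km; move/leP: am.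
rewrite -!multE -!plusE -!minusE; lia.
Qed.

Local Close Scope ring_scope.

Section Main.
Variables (t : nat) (t_gt0 : (0 < t)%N) (Tp : {set tvec t}).
Hypothesis HTp : forall T, T \in Tp -> tv_neg T \in Tp.
Variable k : nat.

Lemma half_card e : #|Tp| = (2 * #|halfspace Tp e|)%N.
Proof. exact: card_closed. Qed.

Definition Bset h (K : {set tvec t}) :=
  [set G in Pfam Tp h | [disjoint G & K]].

Lemma Pfam_mem h G : (G \in Pfam Tp h) = [exists e, (G \subset halfspace Tp e) && (#|G| == h)].
Proof.
apply/bigcupP/existsP => [[e _]|[e He]]; first by rewrite inE => He; exists e.
by exists e => //; rewrite inE.
Qed.

Lemma comm_char K : (1 <= k)%N -> (k <= #|Tp| %/ 2)%N -> K \in nsets Tp k ->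
  tope_committee Tp K = (Bset ((#|Tp| - k + 1) %/ 2) K == set0).
Proof.
move=> k1 k2; rewrite inE => /and3P[KT /eqP cK _].
set h := ((#|Tp| - k + 1) %/ 2)%N.
have HB : (Bset h K != set0) = [exists e, h <= #|halfspace Tp e :\: K|]%N.
  apply/set0Pn/existsP => [[G]|[e He]].
    rewrite inE Pfam_mem => /andP[/existsP[e /andP[GH /eqP cG]] dGK].
    exists e; rewrite -cG; apply: subset_leq_card; by rewrite subsetD GH dGK.
  have : (0 < #|[set A : {set tvec t} | A \subset halfspace Tp e :\: K & #|A| == h]|)%N.
    by rewrite cards_draws bin_gt0.
  case/card_gt0P => A; rewrite inE => /andP[]; rewrite subsetD => /andP[AH dAK] cA.
  by exists A; rewrite inE Pfam_mem dAK andbT; apply/existsP; exists e; rewrite AH cA.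
apply/esym; rewrite -[_ == _]negbK HB negb_exists /tope_committee KT /=.
apply/esym/eq_forallb => e.
have Hm := half_card e.
have Hcap : halfspace Tp e :&: K = [set T in K | T e].
  apply/setP => T; rewrite !inE; case TK: (T \in K); rewrite ?andbF //=.
  by rewrite (subsetP KT _ TK) andbT.
rewrite cardsD Hcap cK.
apply: arith => //.
  by move: k2; rewrite Hm mulKn.
rewrite -Hcap; apply: subset_leq_card; exact: subsetIl.
Qed.

Lemma fc_U (U : {set tvec t}) : U \subset Tp ->
  fc (Tp :\: U) k = g (#|U :|: negset U| - #|U|) ((#|Tp| - #|U :|: negset U|) %/ 2) k.
Proof.
move=> UT.
have UnT : U :|: negset U \subset Tp.
  rewrite subUset UT; apply/subsetP => x; rewrite in_negset => /(subsetP UT) /HTp.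
  by rewrite tv_negK.
have Hs : sing (Tp :\: U) = (U :|: negset U) :\: U.
  apply/setP => y; rewrite !inE in_negset.
  case yU: (y \in U) => //=; case nyU: (tv_neg y \in U) => /=.
    by rewrite -[y]tv_negK HTp ?andbF // (subsetP UT).
  by case yT: (y \in Tp) => //=; rewrite (HTp yT).
have Hp : prs (Tp :\: U) = Tp :\: (U :|: negset U).
  apply/setP => y; rewrite !inE in_negset.
  case yU: (y \in U); case nyU: (tv_neg y \in U); rewrite ?andbF ?andbT //=.
  by case yT: (y \in Tp); rewrite //= (HTp yT).
have cl : forall y, y \in prs (Tp :\: U) -> tv_neg y \in prs (Tp :\: U).
  by move=> z; rewrite !inE tv_negK => /andP[-> ->].
have Hc := card_closed (e0 t_gt0) cl.
rewrite (@fc_g _ t_gt0 #|Tp :\: U| _ (#|U :|: negset U| - #|U|) ((#|Tp| - #|U :|: negset U|) %/ 2)) //.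
  by rewrite Hs cardsDS // subsetUl.
by rewrite -(cardsDS UnT) -Hp Hc mulKn // mul2n.
Qed.

Lemma g0q q : g 0 q k = ('C(q, k) * 2 ^ k)%N.
Proof.
rewrite /g big_nat_recl // bin0 mul1n subn0 big1 ?addn0 //.
Qed.

Local Open Scope ring_scope.

Lemma ie h :
  (#|[set K in nsets Tp k | Bset h K == set0]|)%:Z =
  \sum_(GG : {set {set tvec t}} | GG \subset Pfam Tp h)
     (-1) ^+ #|GG| * (fc (Tp :\: Ufam GG) k)%:Z.
Proof.
rewrite card_sumZ.
transitivity (\sum_(K in nsets Tp k) \sum_(GG : {set {set tvec t}} | GG \subset Pfam Tp h)
   (-1) ^+ #|GG| * ([disjoint Ufam GG & K] : nat)%:Z).
  apply: eq_bigr => K _; rewrite -[in LHS]natz -alt_sum big_mkcond /=.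
  rewrite [RHS]big_mkcond /=; apply: eq_bigr => GG _.
  case GP: (GG \subset Pfam Tp h); last first.
    case GB: (GG \subset Bset h K) => //.
    suff : GG \subset Pfam Tp h by rewrite GP.
    by apply/subsetP => G /(subsetP GB); rewrite inE => /andP[].
  have -> : (GG \subset Bset h K) = [disjoint Ufam GG & K].
    rewrite /Ufam disjoints_subset; apply/subsetP/bigcupsP => H G GG'.
      by move: (H G GG'); rewrite inE (subsetP GP _ GG') /= disjoints_subset.
    by rewrite inE (subsetP GP _ GG') /= disjoints_subset H.
  by case: [disjoint _ & _]; rewrite ?mulr1 ?mulr0.
rewrite exchange_big /=; apply: eq_bigr => GG _.
rewrite -big_distrr /= -card_sumZ; congr (_ * _%:Z).
apply: eq_card => K; rewrite !inE subsetD disjoint_sym.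
  by case: (K \subset Tp); case: [disjoint _ & _]; rewrite ?andbF //= andbT.
Qed.

End Main.

Local Open Scope ring_scope.

Unset Implicit Arguments.
Set Strict Implicit.
Theorem mainTheorem5 (t : nat) (L : {set svec t}) (k : nat) :
  (1 <= t)%N ->
  is_OM_covectors L -> OM_simple L ->
  (1 <= k)%N -> (k <= #|topes L| %/ 2)%N ->
  let Tp := topes L in
  let N := #|Tp| in
  let h := ((N - k + 1) %/ 2)%N in
  (kappa_ring Tp k)%:Z =
    ('C(N %/ 2, k) * 2 ^ k)%:Z +
    \sum_(GG : {set {set tvec t}} |
            [&& GG \subset Pfam Tp h, (1 <= #|GG|)%N,
                (#|GG| <= 'C(N - k, h))%N & (#|Ufam GG| <= N - k)%N])
      (-1) ^+ #|GG| *
      (\sum_(0 <= j < k.+1)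
         ('C(#|Ufam GG :|: negset (Ufam GG)| - #|Ufam GG|, j) *
          'C((N - #|Ufam GG :|: negset (Ufam GG)|) %/ 2, k - j) *
          2 ^ (k - j))%:Z).
Proof.
move=> t_gt0 HOM _ k1 k2 Tp N h.
have HTp : forall T, T \in Tp -> tv_neg T \in Tp by move=> T; apply: topes_neg.
have E1 : kappa_ring Tp k = #|[set K in nsets Tp k | Bset Tp h K == set0]|.
  apply: eq_card => K; rewrite [in RHS]inE.
  case KS: (K \in nsets Tp k) => /=.
    rewrite -(comm_char HTp k1 k2 KS).
    by move: KS; rewrite !inE => /and3P[_ -> ->]; rewrite !andbT.
  apply/negbTE; rewrite inE; apply/negP => /and3P[/andP[KT _] cK nK].
  by move: KS; rewrite inE KT cK nK.
rewrite E1 ie (bigD1 set0) ?sub0set //=.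
have U0 : Ufam (set0 : {set {set tvec t}}) = set0 by rewrite /Ufam big_set0.
have N0 : negset (set0 : {set tvec t}) = set0 by rewrite /negset imset0.
rewrite U0 cards0 expr0 mul1r.
rewrite (fc_U t_gt0 HTp) ?sub0set // N0 setU0 cards0 subn0 g0q.
congr (_ + _); first by rewrite subn0.
rewrite big_mkcond [RHS]big_mkcond /=; apply: eq_bigr => GG _.
case GP: (GG \subset Pfam Tp h); rewrite //=.
set U := Ufam GG.
have UT : U \subset Tp.
  apply/bigcupsP => G /(subsetP GP); rewrite Pfam_mem => /existsP[e /andP[GH _]].
  by apply: subset_trans GH _; apply/subsetP => T; rewrite inE => /andP[].
have cGG : (#|GG| <= 'C(#|U|, h))%N.
  rewrite -cards_draws; apply: subset_leq_card; apply/subsetP => G GG'.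
  move: (subsetP GP _ GG'); rewrite Pfam_mem => /existsP[e /andP[_ cG]].
  by rewrite inE cG andbT /U /Ufam (bigcup_sup G).
rewrite card_gt0.
case: (leqP #|U| (N - k)) => HU.
  rewrite (leq_trans cGG (leq_bin2l _ HU)) andbT.
  case: (GG != set0) => //.
  by rewrite (fc_U t_gt0 HTp) // /g PoszSum.
rewrite andbF.
suff -> : fc (Tp :\: U) k = 0%N by rewrite mulr0; case: ifP.
apply/eqP; rewrite cards_eq0; apply/eqP/setP => K; rewrite !inE.
apply/negP => /and3P[KT /eqP cK _].
have := subset_leq_card KT; rewrite cK cardsDS //.
have kN : (k <= N)%N by apply: leq_trans k2 _; apply: leq_div.
move: k1 HU kN; rewrite -/N -!minusE => /leP k1' /ltP HU /leP kN /leP.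
lia.
Qed.
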